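(* Let $(\mathcal{X},\mathcal{E})$ be a measurable space with a positive measure $\mu$, let $\mathcal{K}:\mathcal{X}\times\mathcal{X}\to\mathbb{R}$ be a function, and let $\mathcal{A}$ be a procedure such that for every $k\ge1$ and every $\mathbf{Y}_k=(Y_1,\dots,Y_k)\in\mathcal{X}^k$, $\mathcal{A}(\mathbf{Y}_k)(x)=\frac1k\sum_{i=1}^k\mathcal{K}(x,Y_i)$ for all $x\in\mathcal{X}$, and $\mathcal{A}(\mathbf{Y}_k)$ is a probability density with respect to $\mu$. Let $V\ge2$ and $n=pV$ with $p\ge1$ an integer, let $\mathbf{X}=(X_1,\dots,X_n)\in\mathcal{X}^n$ and partition $\mathbf{X}$ into $V$ disjoint subsamples $\mathbf{X}_1,\dots,\mathbf{X}_V$, each of size $p$, with $\mathbf{X}_j^c=\mathbf{X}\setminus\mathbf{X}_j$. Set $\widehat{s}=\mathcal{A}(\mathbf{X})$ and $\widehat{s}_j=\mathcal{A}(\mathbf{X}_j^c)$. Then for every probability $P_s$ on $\mathcal{X}$, \[ h^2(s,\widehat{s})\le\frac1V\sum_{j=1}^V h^2(s,\widehat{s}_j). \]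
   Context: For probabilities $P,Q$ on $\mathcal{X}$, the Hellinger distance is $h(P,Q)=\left[\frac12\int(\sqrt{dP}-\sqrt{dQ})^2\right]^{1/2}$, where $dP,dQ$ are densities with respect to any dominating measure; for a density $t$ with respect to $\mu$ one writes $h(s,t)$ for $h(P_s,t\cdot\mu)$. A procedure is a measurable mapping from $\bigcup_{k\ge1}\mathcal{X}^k$ to the set of probability densities with respect to $\mu$. *)

(* Defs.v *)
From HB Require Import structures.
From mathcomp Require Import all_boot all_order all_algebra.
From mathcomp Require Import all_classical all_reals all_analysis.
Set Implicit Arguments. Unset Strict Implicit. Unset Printing Implicit Defensive.
Import Order.TTheory GRing.Theory Num.Theory.
Local Open Scope classical_set_scope.
Local Open Scope ring_scope.

Definition dens_measure d (T : measurableType d) (R : realType)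
  (mu : {measure set T -> \bar R}) (t : T -> R) : set T -> \bar R :=
  fun A => (\int[mu]_(x in A) (t x)%:E)%E.

Definition is_prob_density d (T : measurableType d) (R : realType)
  (mu : {measure set T -> \bar R}) (t : T -> R) : Prop :=
  [/\ measurable_fun setT t, (forall x, 0 <= t x) &
      (\int[mu]_x (t x)%:E = 1)%E].

Definition hellinger2_values d (T : measurableType d) (R : realType)
  (P Q : set T -> \bar R) : set (\bar R) :=
  [set v | exists (nu : {measure set T -> \bar R}) (f g : T -> R),
     [/\ measurable_fun setT f /\ measurable_fun setT g,
         (forall x, 0 <= f x) /\ (forall x, 0 <= g x),
         (forall A, measurable A ->
            P A = (\int[nu]_(x in A) (f x)%:E)%E /\
            Q A = (\int[nu]_(x in A) (g x)%:E)%E) &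
         v = (\int[nu]_x ((2^-1) * (Num.sqrt (f x) - Num.sqrt (g x)) ^+ 2)%:E)%E]].

(* Squared Hellinger distance h^2(P,Q); the value does not depend on the choice
   of dominating measure, so the supremum is that common value. *)
Definition hellinger2 d (T : measurableType d) (R : realType)
  (P Q : set T -> \bar R) : \bar R :=
  ereal_sup (hellinger2_values P Q).

(* Main.v *)
Require Import Defs.
From HB Require Import structures.
From mathcomp Require Import all_boot all_order all_algebra.
From mathcomp Require Import all_classical all_reals all_analysis.
From mathcomp Require Import measurable_realfun.
From mathcomp Require Import ring lra.
Import Order.TTheory GRing.Theory Num.Theory.
Local Open Scope classical_set_scope.
Local Open Scope ring_scope.
Import HBNNSimple.


Section chg.
Context d (T : measurableType d) (R : realType).
Local Open Scope ereal_scope.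

Lemma simple_int (m : {measure set T -> \bar R}) (G : T -> \bar R)
  (G0 : forall x, 0 <= G x) (mG : measurable_fun setT G) E (mE : measurable E)
  (h : {nnsfun T >-> R}) :
  \int[m]_(x in E) ((h x)%:E * G x) =
  \sum_(r \in range h) (r%:E * \int[m]_(x in E `&` h @^-1` [set r]) G x).
Proof.
transitivity (\int[m]_(x in E)
   (\sum_(y \in range h) (y * \1_(h @^-1` [set y]) x)%:E * G x)).
  apply: eq_integral => x xE.
  rewrite -ge0_mule_fsuml => [|y]; last exact: nnfun_muleindic_ge0.
  by rewrite fsumEFin // -(fimfunE _ x).
rewrite ge0_integral_fsum//; last 2 first.
  - move=> y; apply: emeasurable_funM => //; last exact: measurable_funTS.
    apply/measurable_EFinP; apply: measurable_funM => //.
  - by move=> k y Ey; rewrite mule_ge0 ?nnfun_muleindic_ge0.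
apply: eq_fsbigr => r rhn.
under eq_integral do rewrite EFinM -muleA.
rewrite ge0_integralZl//.
- congr (_ * _); rewrite integral_mkcondr; apply: eq_integral => x _.
  by rewrite epatch_indic /= muleC.
- apply: emeasurable_funM; last exact: measurable_funTS.
  by apply/measurable_EFinP; by apply: measurable_indic; exact: measurable_sfunP.
- by move=> t Et; rewrite mule_ge0 ?lee_fin.
- by move: rhn; rewrite inE => -[t _ <-]; rewrite lee_fin.
Qed.

Lemma chg_int_side (m : {measure set T -> \bar R}) (G : T -> \bar R)
  (G0 : forall x, 0 <= G x) (G1 : forall x, G x \is a fin_num)
  (mG : measurable_fun setT G) E (mE : measurable E) (f : T -> \bar R)
  (f0 : forall x, 0 <= f x) (mf : measurable_fun E f) :
  \int[m]_(x in E) (f x * G x) =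
    lim (\int[m]_(x in E) ((nnsfun_approx mE mf n x)%:E * G x) @[n --> \oo]).
Proof.
set h := nnsfun_approx mE mf.
have fg x : E x -> f x * G x = lim (((EFin \o h n) \* G) x @[n --> \oo]).
  by move=> Ex; apply/esym/cvg_lim => //; apply: cvgeZr;
      [exact: G1|exact: cvg_nnsfun_approx].
under eq_integral => x /[!inE] /fg -> //.
apply: monotone_convergence => [//| | |].
- move=> n; apply/emeasurable_funM; last exact: measurable_funTS.
  apply/measurable_funTS; exact/measurable_EFinP.
- by move=> n x Ex /=; rewrite mule_ge0 ?lee_fin.
- by move=> x Ex a b ab/=; rewrite lee_wpmul2r ?lee_fin//; exact/lefP/nd_nnsfun_approx.
Qed.

Lemma chg_int (m1 m2 : {measure set T -> \bar R}) (G1 G2 : T -> \bar R)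
  (G10 : forall x, 0 <= G1 x) (G1f : forall x, G1 x \is a fin_num)
  (mG1 : measurable_fun setT G1)
  (G20 : forall x, 0 <= G2 x) (G2f : forall x, G2 x \is a fin_num)
  (mG2 : measurable_fun setT G2)
  (hG : forall A, measurable A -> \int[m1]_(x in A) G1 x = \int[m2]_(x in A) G2 x)
  E (mE : measurable E) (f : T -> \bar R)
  (f0 : forall x, 0 <= f x) (mf : measurable_fun E f) :
  \int[m1]_(x in E) (f x * G1 x) = \int[m2]_(x in E) (f x * G2 x).
Proof.
rewrite (chg_int_side m1 G1 G10 G1f mG1 E mE f f0 mf).
rewrite (chg_int_side m2 G2 G20 G2f mG2 E mE f f0 mf).
suff -> : (fun n => \int[m1]_(x in E) ((nnsfun_approx mE mf n x)%:E * G1 x)) =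
  (fun n => \int[m2]_(x in E) ((nnsfun_approx mE mf n x)%:E * G2 x)) by [].
apply/funext => n.
rewrite (simple_int m1 G1 G10 mG1 E mE) (simple_int m2 G2 G20 mG2 E mE); apply: eq_fsbigr => r _; congr (_ * _).
apply: hG; apply: measurableI => //.
Qed.

End chg.

Lemma cnt (T : Type) (n V : nat) (X : 'I_n -> T) (blk : 'I_n -> 'I_V) (j : 'I_V) :
  size [seq X i | i <- enum 'I_n & blk i != j] = (n - #|[pred i | blk i == j]|)%N.
Proof.
rewrite size_map size_filter.
have h := cardC [pred i | blk i == j]; rewrite card_ord in h.
have -> : count (fun i => blk i != j) (enum 'I_n) = #|[predC [pred i | blk i == j]]|.
  rewrite cardE /enum_mem size_filter count_filter; apply: eq_count => i /=; rewrite !inE andbT //=.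
move: h; set a := #|_|; set c := #|_| => h.
apply/eqP; rewrite -(eqn_add2l a) subnKC; [by rewrite h | by rewrite -h leq_addr].
Qed.
Lemma avg (T : Type) (R : realFieldType) (K : T -> T -> R) (x : T) (V p : nat)
  (hV : (2 <= V)%N) (hp : (1 <= p)%N) (X : 'I_(p * V) -> T) (blk : 'I_(p * V) -> 'I_V)
  (hblk : forall j : 'I_V, #|[pred i | blk i == j]| = p) :
  let S := [seq X i | i <- enum 'I_(p * V)] in
  let Sj := fun j : 'I_V => [seq X i | i <- enum 'I_(p * V) & blk i != j] in
  (size S)%:R^-1 * \sum_(y <- S) K x y =
  V%:R^-1 * \sum_(j < V) ((size (Sj j))%:R^-1 * \sum_(y <- Sj j) K x y).
Proof.
move=> S Sj.
have hS : size S = (p * V)%N by rewrite size_map size_enum_ord.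
have hSj j : size (Sj j) = (p * (V - 1))%N by rewrite cnt hblk mulnBr muln1.
rewrite hS (eq_bigr (fun j : 'I_V => (p * (V - 1))%:R^-1 * \sum_(y <- Sj j) K x y)); last by move=> j _; rewrite hSj.
rewrite /S /Sj -big_distrr /= big_map big_enum /=.
rewrite (eq_bigr (fun j : 'I_V => \sum_(i < p * V) (if blk i != j then K x (X i) else 0))); last first.
  by move=> j _; rewrite big_map big_filter big_enum_cond big_mkcond.
rewrite exchange_big /=.
have hc i : \sum_(j < V) (if blk i != j then K x (X i) else 0) = (V - 1)%:R * K x (X i).
  rewrite -big_mkcond /= sumr_const.
  have -> : #|[pred j | blk i != j]| = (V - 1)%N.
    have := cardC1 (blk i); rewrite card_ord subn1 => <-.
    by apply: eq_card => j; rewrite !inE eq_sym.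
  by rewrite mulr_natl.
rewrite [in RHS](eq_bigr (fun i : 'I_(p * V) => (V - 1)%:R * K x (X i))); last by move=> i _; rewrite hc.
rewrite -big_distrr /= mulrA mulrA.
congr (_ * _).
have V1 : (V - 1)%:R != 0 :> R by rewrite pnatr_eq0 -lt0n subn_gt0 (leq_trans _ hV).
have V0 : V%:R != 0 :> R by rewrite pnatr_eq0 -lt0n (leq_trans _ hV).
have p0 : p%:R != 0 :> R by rewrite pnatr_eq0 -lt0n.
rewrite !natrM; field.
by rewrite V0 p0 V1.
Qed.
Lemma pw (R : realFieldType) (V : nat) (hV : (0 < V)%N) (a b : R) (c : 'I_V -> R)
  (a0 : 0 <= a) (b0 : 0 <= b) (c0 : forall j, 0 <= c j)
  (hc : \sum_(j < V) c j ^+ 2 = V%:R) :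
  2^-1 * (a - b) ^+ 2 <= V%:R^-1 * \sum_(j < V) (2^-1 * (a - b * c j) ^+ 2).
Proof.
have h j : (a - b) ^+ 2 + (c j ^+ 2 - 1) * (b ^+ 2 - a * b) <= (a - b * c j) ^+ 2.
  rewrite -subr_ge0.
  have -> : (a - b * c j) ^+ 2 - ((a - b) ^+ 2 + (c j ^+ 2 - 1) * (b ^+ 2 - a * b))
    = a * b * (c j - 1) ^+ 2 by ring.
  by rewrite mulr_ge0 ?sqr_ge0 ?mulr_ge0.
have hs : V%:R * (a - b) ^+ 2 <= \sum_(j < V) (a - b * c j) ^+ 2.
  apply: le_trans (ler_sum _ (fun j _ => h j)).
  rewrite big_split /= sumr_const card_ord -big_distrl /= sumrB hc sumr_const card_ord.
  by rewrite mulr_natl subrr mul0r addr0.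
rewrite -big_distrr /=.
have V0 : V%:R != 0 :> R by rewrite pnatr_eq0 -lt0n.
have Vp : 0 < V%:R :> R by rewrite ltr0n.
rewrite -[X in X <= _](mulKf V0) [X in _ <= X]mulrA [X in _ * X <= _]mulrCA.
rewrite -[X in _ <= X]mulrA.
apply: ler_wpM2l; first by rewrite invr_ge0 ltW.
apply: ler_wpM2l => //; lra.
Qed.

Lemma measurable_inv (R : realType) : measurable_fun [set: R] (@GRing.inv R).
Proof.
have -> : [set: R] = [set x | x != 0] `|` [set 0].
  apply/seteqP; split => x //= _; case: (eqVneq x 0) => [->|]; [by right|by left].
apply/measurable_funU => //.
  apply: open_measurable; exact: open_neq.
split.
- apply: open_continuous_measurable_fun; first exact: open_neq.
  by move=> x; rewrite inE /= => x0; exact: inv_continuous.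
- exact: measurable_fun_set1.
Qed.

Theorem proposition1 (d : measure_display) (T : measurableType d) (R : realType)
  (mu : {measure set T -> \bar R}) (K : T -> T -> R) (A : seq T -> T -> R)
  (hA : forall (Y : seq T), (0 < size Y)%N ->
          forall x, A Y x = (size Y)%:R^-1 * \sum_(y <- Y) K x y)
  (hAdens : forall (Y : seq T), (0 < size Y)%N -> is_prob_density mu (A Y))
  (V p : nat) (hV : (2 <= V)%N) (hp : (1 <= p)%N)
  (X : 'I_(p * V) -> T) (blk : 'I_(p * V) -> 'I_V)
  (hblk : forall j : 'I_V, #|[pred i | blk i == j]| = p)
  (Ps : probability T R) :
  let shat := A [seq X i | i <- enum 'I_(p * V)] in
  let shat_j := fun j : 'I_V => A [seq X i | i <- enum 'I_(p * V) & blk i != j] in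
  (hellinger2 Ps (dens_measure mu shat)
     <= (V%:R^-1)%:E * \sum_(j < V) hellinger2 Ps (dens_measure mu (shat_j j)))%E.
Proof.
pose shat := A [seq X i | i <- enum 'I_(p * V)].
pose shat_j := fun j : 'I_V => A [seq X i | i <- enum 'I_(p * V) & blk i != j].
change (hellinger2 Ps (dens_measure mu shat)
     <= (V%:R^-1)%:E * \sum_(j < V) hellinger2 Ps (dens_measure mu (shat_j j)))%E.
have hVpos : (0 < V)%N by apply: leq_trans hV.
have hsz : (0 < size [seq X i | i <- enum 'I_(p * V)])%N.
  by rewrite size_map size_enum_ord muln_gt0 hp hVpos.
have hszj j : (0 < size [seq X i | i <- enum 'I_(p * V) & blk i != j])%N.
  by rewrite cnt hblk subn_gt0 -{1}[p]muln1 ltn_pmul2l.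
have [ms s0 _] := hAdens _ hsz.
have msj j : measurable_fun setT (shat_j j) by have [] := hAdens _ (hszj j).
have sj0 j x : 0 <= shat_j j x by have [_ h _] := hAdens _ (hszj j); exact: h.
have havg x : shat x = V%:R^-1 * \sum_(j < V) shat_j j x.
  rewrite /shat hA //; have := @avg _ _ K x V p hV hp X blk hblk; rewrite /= => ->.
  by congr (_ * _); apply: eq_bigr => j _; rewrite /shat_j hA.
have V0 : V%:R != 0 :> R by rewrite pnatr_eq0 -lt0n.
have hz x j : shat x = 0 -> shat_j j x = 0.
  move=> h0; move: (havg x); rewrite h0 => /esym /eqP.
  rewrite mulf_eq0 invr_eq0 (negbTE V0) /= => /eqP H.
  by apply: (psumr_eq0P (P:=xpredT) (F:=fun i => shat_j i x)) => // i _; exact: sj0.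
pose Z := shat @^-1` [set 0].
have mZ : measurable Z.
  by have := ms measurableT [set 0] (measurable_set1 0); rewrite setTI.
have xZ x : (x \in Z) = (shat x == 0).
  by apply/idP/eqP => [/set_mem|/mem_set].
pose r j x := shat_j j x * (shat x)^-1 + \1_Z x.
have r0 j x : 0 <= r j x.
  by rewrite /r addr_ge0 ?mulr_ge0 ?invr_ge0 // indicE ler0n.
have rmul j x : r j x * shat x = shat_j j x.
  rewrite /r indicE xZ; case: (eqVneq (shat x) 0) => h.
    by rewrite h mulr0 hz.
  by rewrite addr0 -mulrA mulVf // mulr1.
have rsum x : \sum_(j < V) r j x = V%:R.
  rewrite /r big_split /= -big_distrl /= sumr_const card_ord indicE xZ.
  case: (eqVneq (shat x) 0) => h.
    rewrite big1 ?mul0r ?add0r //; last by move=> j _; rewrite hz.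
  have -> : \sum_(j < V) shat_j j x = V%:R * shat x.
    by rewrite havg mulrA mulfV // mul1r.
  by rewrite /= mul0rn addr0 -mulrA mulfV // mulr1.
have mr j : measurable_fun setT (r j).
  apply: measurable_funD; last exact: measurable_indic.
  apply: measurable_funM => //; exact: measurableT_comp (measurable_inv _) ms.
have msqrt : measurable_fun setT (@Num.sqrt R).
  exact: continuous_measurable_fun (@sqrt_continuous R).
rewrite /hellinger2; apply: ge_ereal_sup => _ [nu [f [g [[mf mg] [f0 g0] hrep ->]]]].
pose phi j x := ((2^-1 * (Num.sqrt (f x) - Num.sqrt (g x * r j x)) ^+ 2)%:E : \bar R).
have mphi j : measurable_fun setT (phi j).
  apply/measurable_EFinP; apply: measurable_funM => //; apply: measurable_funX.
  apply: measurable_funB; apply: measurableT_comp => //; exact: measurable_funM.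
have phi0 j x : (0 <= phi j x)%E by rewrite lee_fin mulr_ge0 ?sqr_ge0 ?invr_ge0.
have hv j : (\int[nu]_x phi j x <= hellinger2 Ps (dens_measure mu (shat_j j)))%E.
  apply: ereal_sup_ubound; exists nu, f, (fun x => g x * r j x); split => //.
  - split => //; exact: measurable_funM.
  - split => // x; exact: mulr_ge0.
  move=> B mB; have [h1 h2] := hrep B mB; split => //.
  rewrite /dens_measure.
  transitivity (\int[mu]_(x in B) ((r j x)%:E * (shat x)%:E))%E.
    by apply: eq_integral => x _; rewrite -EFinM rmul.
  rewrite (@chg_int _ _ _ mu nu (EFin \o shat) (EFin \o g)) //.
  - by apply: eq_integral => x _; rewrite /= -EFinM mulrC.
  - exact/measurable_EFinP.
  - exact/measurable_EFinP.
  - by move=> A0 mA0; exact: (hrep A0 mA0).2.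
  - by move=> x; rewrite lee_fin.
  - by apply/measurable_EFinP; exact: measurable_funTS.
have msum : measurable_fun setT (fun x => (\sum_(j < V) phi j x)%E).
  exact: emeasurable_sum.
apply: (@le_trans _ _ (\int[nu]_x ((V%:R^-1)%:E * \sum_(j < V) phi j x))%E).
  apply: ge0_le_integral => //.
  - by move=> x _; rewrite lee_fin mulr_ge0 ?sqr_ge0 ?invr_ge0.
  - apply/measurable_EFinP; apply: measurable_funM => //; apply: measurable_funX.
    by apply: measurable_funB; apply: measurableT_comp.
  - exact: emeasurable_funM.
  move=> x _; rewrite /phi sumEFin -EFinM lee_fin.
  rewrite (eq_bigr (fun j => 2^-1 * (Num.sqrt (f x) - Num.sqrt (g x) * Num.sqrt (r j x)) ^+ 2));
    last by move=> j _; rewrite sqrtrM.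
  apply: pw => //.
  by rewrite (eq_bigr (fun j => r j x)) ?rsum // => j _; rewrite sqr_sqrtr.
rewrite ge0_integralZl //; last first.
  by move=> x _; apply: sume_ge0 => j _; exact: phi0.
rewrite ge0_integral_sum //.
apply: lee_wpmul2l; first by rewrite lee_fin invr_ge0.
by apply: lee_sum => j _; exact: hv.
Qed.
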